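(* Fix stress levels $x_1<x_2$, a stress-change time $\tau>0$, and inspection times $0=t_0<t_1<\cdots<t_L$ with $t_k=\tau$ for some $1\le k<L$. Let $\theta=(\gamma_0,\gamma_1,\gamma_2,a_1)\in\Theta=(0,\infty)^4$, and let $s=s(\theta)=u-\tau$, where $u$ is the unique positive root of $\frac{\gamma_2}{3}u^3+\frac{\gamma_1}{2}u^2+\gamma_0u-e^{a_1(x_1-x_2)}\left(\gamma_0\tau+\gamma_1\frac{\tau^2}{2}+\gamma_2\frac{\tau^3}{3}\right)=0$. Define $$R_\theta(t,x_1)=\exp\!\Big(-e^{a_1x_1}\big(\gamma_0t+\gamma_1\tfrac{t^2}{2}+\gamma_2\tfrac{t^3}{3}\big)\Big),\quad R_\theta(t,x_2)=\exp\!\Big(-e^{a_1x_2}\big(\gamma_0(t+s)+\gamma_1\tfrac{(t+s)^2}{2}+\gamma_2\tfrac{(t+s)^3}{3}\big)\Big),$$ and $R_\theta(t)=R_\theta(t,x_1)$ for $0\le t\le\tau$, $R_\theta(t)=R_\theta(t,x_2)$ for $t\ge\tau$. Let $\pi_j(\theta)=R_\theta(t_{j-1})-R_\theta(t_j)$ for $j=1,\dots,L$, $\pi_{L+1}(\theta)=R_\theta(t_L)$, $\pi(\theta)=(\pi_1(\theta),\dots,\pi_{L+1}(\theta))^T$. Given counts $(n_1,\dots,n_{L+1})$ with $N=\sum_jn_j$, $\widehat p=(n_1/N,\dots,n_{L+1}/N)^T$, and $\beta\ge0$, let $\widehat\theta_\beta$ be a minimizer over $\Theta$ of $d_\beta(\widehat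 p,\pi(\theta))$, where for $\beta>0$ $$d_\beta(\widehat p,\pi(\theta))=\sum_{j=1}^{L+1}\Big[\pi_j(\theta)^{\beta+1}-\big(1+\tfrac1\beta\big)\pi_j(\theta)^\beta\widehat p_j+\tfrac1\beta\widehat p_j^{\beta+1}\Big]$$ and for $\beta=0$, $d_0(\widehat p,\pi(\theta))=\sum_j\widehat p_j\log(\widehat p_j/\pi_j(\theta))$. Then $\widehat\theta_\beta$ satisfies $U_\beta(\widehat\theta_\beta)=0\in\mathbb{R}^4$, where $$U_\beta(\theta)=W(\theta)^TD(\theta)^{\beta-1}\big(\widehat p-\pi(\theta)\big),$$ $D(\theta)=\mathrm{diag}(\pi_1(\theta),\dots,\pi_{L+1}(\theta))$, and $W(\theta)$ is the $(L+1)\times4$ Jacobian matrix of $\pi(\theta)$ whose $j$-th row is $w_j^T$ with $w_j=\frac{\partial R_\theta(t_{j-1},x_1)}{\partial\theta}-\frac{\partial R_\theta(t_j,x_1)}{\partial\theta}$ if $t_{j-1}<\tau$, $w_j=\frac{\partial R_\theta(t_{j-1},x_2)}{\partial\theta}-\frac{\partial R_\theta(t_j,x_2)}{\partial\theta}$ if $\tau\le t_{j-1}$ and $j\le L$, and $w_{L+1}=\frac{\partial R_\theta(t_L,x_2)}{\partial\theta}$. Here, with $k_1(t)=\gamma_2t^2+\gamma_1t+\gamma_0$ and $k_2(t)=\frac{\gamma_2}{3}t^2+\frac{\gamma_1}{2}t+\gamma_0$, $$\frac{\partial R_\theta(t,x_1)}{\partial\gamma_0}=-R_\theta(t,x_1)e^{a_1x_1}t,\quad\frac{\partial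 R_\theta(t,x_1)}{\partial\gamma_1}=-R_\theta(t,x_1)e^{a_1x_1}\frac{t^2}{2},\quad\frac{\partial R_\theta(t,x_1)}{\partial\gamma_2}=-R_\theta(t,x_1)e^{a_1x_1}\frac{t^3}{3},$$ $$\frac{\partial R_\theta(t,x_1)}{\partial a_1}=-R_\theta(t,x_1)e^{a_1x_1}t\,k_2(t)\,x_1,$$ $$\frac{\partial R_\theta(t,x_2)}{\partial\gamma_0}=-R_\theta(t,x_2)e^{a_1x_2}\Big((t+s)+(\tau+s)\frac{k_1(t+s)}{k_1(\tau+s)}\Big(\frac{k_2(\tau+s)}{k_2(\tau)}-1\Big)\Big),$$ $$\frac{\partial R_\theta(t,x_2)}{\partial\gamma_1}=-R_\theta(t,x_2)e^{a_1x_2}\Big(\frac{(t+s)^2}{2}+\frac{\tau+s}{2}\frac{k_1(t+s)}{k_1(\tau+s)}\Big(\tau\frac{k_2(\tau+s)}{k_2(\tau)}-(\tau+s)\Big)\Big),$$ $$\frac{\partial R_\theta(t,x_2)}{\partial\gamma_2}=-R_\theta(t,x_2)e^{a_1x_2}\Big(\frac{(t+s)^3}{3}+\frac{\tau+s}{3}\frac{k_1(t+s)}{k_1(\tau+s)}\Big(\tau^2\frac{k_2(\tau+s)}{k_2(\tau)}-(\tau+s)^2\Big)\Big),$$ $$\frac{\partial R_\theta(t,x_2)}{\partial a_1}=-R_\theta(t,x_2)e^{a_1x_2}\Big[(t+s)k_2(t+s)x_2+\frac{k_1(t+s)}{k_1(\tau+s)}(\tau+s)k_2(\tau+s)(x_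1-x_2)\Big].$$
   Context: Interval-monitored simple step-stress accelerated life test under a proportional hazards model with quadratic baseline hazard $h_0(t)=\gamma_0+\gamma_1t+\gamma_2t^2$ and stress effect $e^{a_1x}$, combined with the cumulative exposure model (the shift $s$ makes the cumulative hazard continuous at $\tau$, with $s<0$ and $\tau+s>0$). $N$ devices are tested; $n_j$ is the number failing in $(t_{j-1},t_j]$ for $j\le L$ and $n_{L+1}$ the number surviving past $t_L$. Stress is $x_1$ on $[0,\tau)$ and $x_2$ afterwards. *)

(* Defs.v *)
From Stdlib Require Import Reals Lra ClassicalEpsilon.
Open Scope R_scope.

Record theta := mkTheta { g0 : R; g1 : R; g2 : R; a1 : R }.

Definition inTheta (th : theta) : Prop :=
  0 < g0 th /\ 0 < g1 th /\ 0 < g2 th /\ 0 < a1 th.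

Fixpoint sum1 (n : nat) (f : nat -> R) : R :=
  match n with O => 0 | S m => sum1 m f + f (S m) end.

Definition Hc (th : theta) (t : R) : R :=
  g0 th * t + g1 th * t ^ 2 / 2 + g2 th * t ^ 3 / 3.

Definition k1 (th : theta) (t : R) : R := g2 th * t ^ 2 + g1 th * t + g0 th.
Definition k2 (th : theta) (t : R) : R := g2 th / 3 * t ^ 2 + g1 th / 2 * t + g0 th.

Definition u_root (x1 x2 tau : R) (th : theta) : R :=
  epsilon (inhabits 0)
    (fun u => 0 < u /\
       g2 th / 3 * u ^ 3 + g1 th / 2 * u ^ 2 + g0 th * u
       - exp (a1 th * (x1 - x2)) * (g0 th * tau + g1 th * tau ^ 2 / 2 + g2 th * tau ^ 3 / 3) = 0).

Definition s_shift (x1 x2 tau : R) (th : theta) : R := u_root x1 x2 tau th - tau.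

Definition Rx1 (x1 : R) (th : theta) (t : R) : R :=
  exp (- (exp (a1 th * x1) * Hc th t)).
Definition Rx2 (x1 x2 tau : R) (th : theta) (t : R) : R :=
  exp (- (exp (a1 th * x2) * Hc th (t + s_shift x1 x2 tau th))).

Definition Rth (x1 x2 tau : R) (th : theta) (t : R) : R :=
  if Rle_dec t tau then Rx1 x1 th t else Rx2 x1 x2 tau th t.

Definition pi_ (x1 x2 tau : R) (L : nat) (tt : nat -> R) (th : theta) (j : nat) : R :=
  if (j <=? L)%nat then Rth x1 x2 tau th (tt (j - 1)%nat) - Rth x1 x2 tau th (tt j)
  else Rth x1 x2 tau th (tt L).

Definition Ntot (L : nat) (n : nat -> nat) : nat :=
  (fix f m := match m with O => O | S m' => (f m' + n (S m'))%nat end) (S L).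
Definition phat (L : nat) (n : nat -> nat) (j : nat) : R :=
  INR (n j) / INR (Ntot L n).

(* positive real power (x > 0), and 0 for x <= 0 (used with positive exponents) *)
Definition pw (x y : R) : R := if Rlt_dec 0 x then Rpower x y else 0.

Definition dbeta (beta : R) (L : nat) (p pi : nat -> R) : R :=
  if Req_EM_T beta 0 then
    sum1 (S L) (fun j => if Req_EM_T (p j) 0 then 0 else p j * ln (p j / pi j))
  else
    sum1 (S L) (fun j => pw (pi j) (beta + 1) - (1 + / beta) * pw (pi j) beta * p j
                         + / beta * pw (p j) (beta + 1)).

Definition dRx1 (x1 : R) (th : theta) (t : R) (i : nat) : R :=
  let c := - (Rx1 x1 th t * exp (a1 th * x1)) in
  match i with
  | 0%nat => c * t
  | 1%nat => c * (t ^ 2 / 2)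
  | 2%nat => c * (t ^ 3 / 3)
  | _ => c * (t * k2 th t * x1)
  end.

Definition dRx2 (x1 x2 tau : R) (th : theta) (t : R) (i : nat) : R :=
  let s := s_shift x1 x2 tau th in
  let c := - (Rx2 x1 x2 tau th t * exp (a1 th * x2)) in
  let q := k1 th (t + s) / k1 th (tau + s) in
  let r := k2 th (tau + s) / k2 th tau in
  match i with
  | 0%nat => c * ((t + s) + (tau + s) * q * (r - 1))
  | 1%nat => c * ((t + s) ^ 2 / 2 + (tau + s) / 2 * q * (tau * r - (tau + s)))
  | 2%nat => c * ((t + s) ^ 3 / 3 + (tau + s) / 3 * q * (tau ^ 2 * r - (tau + s) ^ 2))
  | _ => c * ((t + s) * k2 th (t + s) * x2
              + q * (tau + s) * k2 th (tau + s) * (x1 - x2))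
  end.

Definition wrow (x1 x2 tau : R) (L : nat) (tt : nat -> R) (th : theta) (j i : nat) : R :=
  if (j <=? L)%nat then
    if Rlt_dec (tt (j - 1)%nat) tau
    then dRx1 x1 th (tt (j - 1)%nat) i - dRx1 x1 th (tt j) i
    else dRx2 x1 x2 tau th (tt (j - 1)%nat) i - dRx2 x1 x2 tau th (tt j) i
  else dRx2 x1 x2 tau th (tt L) i.

Definition Ubeta (x1 x2 tau beta : R) (L : nat) (tt : nat -> R) (p : nat -> R)
  (th : theta) (i : nat) : R :=
  sum1 (S L) (fun j => wrow x1 x2 tau L tt th j i
                       * Rpower (pi_ x1 x2 tau L tt th j) (beta - 1)
                       * (p j - pi_ x1 x2 tau L tt th j)).

(* Main.v *)
Require Import Defs.
From Stdlib Require Import Reals Lra Lia ClassicalEpsilon.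
From Coquelicot Require Import Coquelicot.
Open Scope R_scope.

Definition thd (th : theta) (d0 d1 d2 d3 h : R) : theta :=
  mkTheta (g0 th * exp (h*d0)) (g1 th * exp (h*d1)) (g2 th * exp (h*d2)) (a1 th * exp (h*d3)).

Lemma thd0 th d0 d1 d2 d3 : thd th d0 d1 d2 d3 0 = th.
Proof. destruct th; unfold thd; simpl; rewrite !Rmult_0_l, exp_0, !Rmult_1_r; reflexivity. Qed.

Lemma thd_in th d0 d1 d2 d3 h : inTheta th -> inTheta (thd th d0 d1 d2 d3 h).
Proof.
  intros [H0 [H1 [H2 H3]]]; unfold inTheta, thd; simpl.
  repeat split; apply Rmult_lt_0_compat; auto; apply exp_pos.
Qed.

Lemma Hc_pos th t : inTheta th -> 0 < t -> 0 < Hc th t.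
Proof.
  intros [H0 [H1 [H2 H3]]] Ht; unfold Hc.
  assert (0 < g1 th * t^2) by (apply Rmult_lt_0_compat; auto; apply pow_lt; auto).
  assert (0 < g2 th * t^3) by (apply Rmult_lt_0_compat; auto; apply pow_lt; auto).
  assert (0 < g0 th * t) by (apply Rmult_lt_0_compat; auto).
  lra.
Qed.

Lemma u_spec x1 x2 tau th : 0 < tau -> inTheta th ->
  0 < u_root x1 x2 tau th /\
  Hc th (u_root x1 x2 tau th) = exp (a1 th * (x1 - x2)) * Hc th tau.
Proof.
  intros Htau Hth.
  pose (K := exp (a1 th * (x1 - x2)) * (g0 th * tau + g1 th * tau ^ 2 / 2 + g2 th * tau ^ 3 / 3)).
  assert (HK : 0 < K).
  { unfold K; apply Rmult_lt_0_compat; [apply exp_pos|]. apply (Hc_pos th tau Hth Htau). }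
  destruct Hth as [H0 [H1 [H2 H3]]].
  assert (Ex : exists u, 0 < u /\
       g2 th / 3 * u ^ 3 + g1 th / 2 * u ^ 2 + g0 th * u
       - exp (a1 th * (x1 - x2)) * (g0 th * tau + g1 th * tau ^ 2 / 2 + g2 th * tau ^ 3 / 3) = 0).
  { pose (f := fun u => g2 th / 3 * u ^ 3 + g1 th / 2 * u ^ 2 + g0 th * u - K).
    assert (Hc : continuity f) by (unfold f; reg).
    assert (Hy : 0 < 1 + K / g0 th) by (assert (0 < K / g0 th) by (apply Rdiv_lt_0_compat; auto); lra).
    destruct (IVT f 0 (1 + K / g0 th) Hc Hy) as [z [Hz1 Hz2]].
    { assert (f 0 = -K) by (unfold f; ring). lra. }
    { unfold f. set (y := 1 + K / g0 th).
      assert (0 <= g2 th / 3 * y^3) by (apply Rmult_le_pos; [lra| apply pow_le; unfold y in *; lra]).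
      assert (0 <= g1 th / 2 * y^2) by (apply Rmult_le_pos; [lra| apply pow_le; unfold y in *; lra]).
      assert (g0 th * y = g0 th + K) by (unfold y; field; lra).
      lra. }
    exists z; split.
    { destruct Hz1 as [Hz1 _]; destruct (Rle_lt_or_eq_dec 0 z Hz1) as [|e]; auto.
      subst z. assert (f 0 = -K) by (unfold f; ring). lra. }
    exact Hz2. }
  pose proof (epsilon_spec (inhabits 0) _ Ex) as [P1 P2].
  fold (u_root x1 x2 tau th) in P1, P2.
  split; auto. unfold Hc. lra.
Qed.

Lemma cp_plus f g x : continuity_pt f x -> continuity_pt g x -> continuity_pt (fun y => f y + g y) x.
Proof. exact (continuity_pt_plus f g x). Qed.
Lemma cp_mult f g x : continuity_pt f x -> continuity_pt g x -> continuity_pt (fun y => f y * g y) x.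
Proof. exact (continuity_pt_mult f g x). Qed.
Lemma cp_opp f x : continuity_pt f x -> continuity_pt (fun y => - f y) x.
Proof. exact (continuity_pt_opp f x). Qed.
Lemma cp_div f g x : continuity_pt f x -> continuity_pt g x -> g x <> 0 -> continuity_pt (fun y => f y / g y) x.
Proof. exact (continuity_pt_div f g x). Qed.
Lemma cp_const c x : continuity_pt (fun _ => c) x.
Proof. exact (continuity_pt_const (fun _ => c) x (fun _ _ => eq_refl)). Qed.

Lemma cp_pow f n x : continuity_pt f x -> continuity_pt (fun y => f y ^ n) x.
Proof.
  intro H; induction n as [|n IH]; simpl.
  - apply cp_const.
  - apply cp_mult; auto.
Qed.

Lemma L_squeeze (f w : R -> R) : (forall h, Rabs (f h - f 0) <= w h) -> continuity_pt w 0 -> w 0 = 0 ->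
  continuity_pt f 0.
Proof.
  intros Hb Hw Hw0 eps Heps.
  destruct (Hw eps Heps) as [alp [Halp H]].
  exists alp; split; auto. intros x Hx.
  specialize (H x Hx). simpl in *. unfold R_dist in *. rewrite Hw0 in H.
  specialize (Hb x). rewrite Rminus_0_r in H.
  apply Rle_lt_trans with (w x); auto. apply Rle_lt_trans with (Rabs (w x)); auto. apply RRle_abs.
Qed.

Lemma L_quot (f : R -> R) l : derivable_pt_lim f 0 l ->
  continuity_pt (fun h => if Req_EM_T h 0 then l else (f h - f 0) / h) 0.
Proof.
  intros Hd eps Heps.
  destruct (Hd eps Heps) as [del H].
  exists del; split; [apply cond_pos|]. intros x [[_ Hx0] Hx]. simpl in *. unfold R_dist in *.
  destruct (Req_EM_T x 0) as [e|_]; [subst; congruence|].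
  destruct (Req_EM_T 0 0) as [_|n]; [|congruence].
  rewrite Rminus_0_r in Hx.
  specialize (H x (not_eq_sym Hx0) Hx). rewrite Rplus_0_l in H. exact H.
Qed.

Lemma L_cara (f P : R -> R) : (forall h, f h = f 0 + h * P h) -> continuity_pt P 0 ->
  derivable_pt_lim f 0 (P 0).
Proof.
  intros Hf HP eps Heps.
  destruct (HP eps Heps) as [alp [Halp H]].
  exists (mkposreal alp Halp). intros h Hh0 Hh. simpl in *.
  rewrite Rplus_0_l, (Hf h).
  replace ((f 0 + h * P h - f 0) / h) with (P h) by (field; auto).
  apply (H h). split; [split; [exact I| auto]|]. unfold Rdist; rewrite Rminus_0_r; auto.
Qed.

Lemma is_derive_cont f x l : is_derive f x l -> continuity_pt f x.
Proof.
  intro H. apply is_derive_Reals in H.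
  apply derivable_continuous_pt. exists l. exact H.
Qed.

Lemma U_deriv x1 x2 tau th d0 d1 d2 d3 : 0 < tau -> inTheta th ->
  let u0 := u_root x1 x2 tau th in
  let E := exp (a1 th * (x1 - x2)) in
  let G' := g0 th*d0*u0 + g1 th*d1*u0^2/2 + g2 th*d2*u0^3/3
     - (E*(a1 th*d3)*(x1-x2)*Hc th tau + E*(g0 th*d0*tau + g1 th*d1*tau^2/2 + g2 th*d2*tau^3/3)) in
  is_derive (fun h => u_root x1 x2 tau (thd th d0 d1 d2 d3 h)) 0 (- G' / k1 th u0).
Proof.
  intros Htau Hth u0 E G'.
  set (Uf := fun h => u_root x1 x2 tau (thd th d0 d1 d2 d3 h)).
  set (G := fun h => Hc (thd th d0 d1 d2 d3 h) u0
            - exp (a1 (thd th d0 d1 d2 d3 h) * (x1 - x2)) * Hc (thd th d0 d1 d2 d3 h) tau).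
  assert (HG : is_derive G 0 G').
  { unfold G, Hc, thd, G', E; cbn [g0 g1 g2 a1]. auto_derive; auto.
    rewrite !Rmult_0_l, !exp_0, !Rmult_1_r. unfold Hc. match goal with |- ?a = ?b => change (a = b :> R) end. field. }
  destruct (u_spec x1 x2 tau th Htau Hth) as [Hu0 Hu0e]. fold u0 in Hu0, Hu0e.
  assert (HG0 : G 0 = 0).
  { unfold G. rewrite thd0. rewrite Hu0e. ring. }
  set (A := fun h => g0 (thd th d0 d1 d2 d3 h) + g1 (thd th d0 d1 d2 d3 h) * (Uf h + u0) / 2
                     + g2 (thd th d0 d1 d2 d3 h) * (Uf h ^ 2 + Uf h * u0 + u0 ^ 2) / 3).
  assert (Hrel : forall h, (Uf h - u0) * A h = - G h).
  { intro h. destruct (u_spec x1 x2 tau (thd th d0 d1 d2 d3 h) Htau (thd_in _ _ _ _ _ h Hth)) as [_ He].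
    fold (Uf h) in He.
    assert (Hid : (Uf h - u0) * A h = Hc (thd th d0 d1 d2 d3 h) (Uf h) - Hc (thd th d0 d1 d2 d3 h) u0)
      by (unfold A, Hc; field).
    rewrite Hid, He. unfold G. ring. }
  assert (HUpos : forall h, 0 < Uf h).
  { intro h. apply (u_spec x1 x2 tau (thd th d0 d1 d2 d3 h) Htau (thd_in _ _ _ _ _ h Hth)). }
  assert (HA : forall h, 0 < g0 (thd th d0 d1 d2 d3 h) <= A h).
  { intro h. destruct (thd_in th d0 d1 d2 d3 h Hth) as [P0 [P1 [P2 _]]].
    split; auto. unfold A.
    assert (0 <= g1 (thd th d0 d1 d2 d3 h) * (Uf h + u0) / 2).
    { specialize (HUpos h). apply Rmult_le_pos; [|lra]. apply Rmult_le_pos; lra. }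
    assert (0 <= g2 (thd th d0 d1 d2 d3 h) * (Uf h ^ 2 + Uf h * u0 + u0 ^ 2) / 3).
    { specialize (HUpos h). apply Rmult_le_pos; [|lra]. apply Rmult_le_pos; [lra|].
      assert (0 <= Uf h * u0) by (apply Rmult_le_pos; lra). 
      assert (0 <= Uf h ^ 2) by (apply pow_le; lra).
      assert (0 <= u0 ^ 2) by (apply pow_le; lra). lra. }
    lra. }
  assert (HU0 : Uf 0 = u0) by (unfold Uf; rewrite thd0; reflexivity).
  assert (Hg0c : continuity_pt (fun h => g0 (thd th d0 d1 d2 d3 h)) 0) by (unfold thd; cbn [g0 g1 g2 a1]; reg).
  assert (Hg1c : continuity_pt (fun h => g1 (thd th d0 d1 d2 d3 h)) 0) by (unfold thd; cbn [g0 g1 g2 a1]; reg).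
  assert (Hg2c : continuity_pt (fun h => g2 (thd th d0 d1 d2 d3 h)) 0) by (unfold thd; cbn [g0 g1 g2 a1]; reg).
  assert (HUc : continuity_pt Uf 0).
  { apply (L_squeeze Uf (fun h => Rabs (G h) / g0 (thd th d0 d1 d2 d3 h))).
    - intro h. rewrite HU0. destruct (HA h) as [Ha1 Ha2].
      apply (Rmult_le_reg_r (g0 (thd th d0 d1 d2 d3 h))); auto.
      unfold Rdiv; rewrite Rmult_assoc, Rinv_l, Rmult_1_r by lra.
      replace (Rabs (G h)) with (Rabs (Uf h - u0) * A h).
      + apply Rmult_le_compat_l; [apply Rabs_pos| lra].
      + rewrite <- (Rabs_Ropp (G h)), <- Hrel, Rabs_mult, (Rabs_right (A h)) by lra. reflexivity.
    - apply cp_div; auto.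
      + apply (continuity_pt_comp G Rabs). apply (is_derive_cont _ _ _ HG). apply Rcontinuity_abs.
      + destruct (HA 0); lra.
    - rewrite HG0, Rabs_R0. unfold Rdiv; ring. }
  set (Q := fun h => if Req_EM_T h 0 then G' else (G h - G 0) / h).
  assert (HQc : continuity_pt Q 0) by (apply L_quot; apply is_derive_Reals; exact HG).
  assert (HAc : continuity_pt A 0).
  { unfold A. repeat first [assumption | apply cp_plus | apply cp_mult | apply cp_div | apply cp_pow | apply cp_const].
    all: lra. }
  set (P := fun h => - Q h / A h).
  assert (HPc : continuity_pt P 0).
  { unfold P. apply cp_div; auto. apply cp_opp; auto. destruct (HA 0); lra. }
  assert (Hcar : forall h, Uf h = Uf 0 + h * P h).
  { intro h. rewrite HU0. unfold P, Q. destruct (Req_EM_T h 0) as [e|ne].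
    - subst h. rewrite HU0. ring.
    - rewrite HG0. destruct (HA h). specialize (Hrel h).
      apply (Rmult_eq_reg_r (A h)); [|lra]. field_simplify; try lra.
      }
  pose proof (L_cara Uf P Hcar HPc) as HD.
  apply is_derive_Reals.
  replace (- G' / k1 th u0) with (P 0); auto.
  unfold P, Q. destruct (Req_EM_T 0 0) as [_|n]; [|congruence].
  unfold A. rewrite HU0, thd0. unfold k1. field. destruct Hth as [P0 [P1 [P2 _]]].
  assert (0 < g2 th * u0^2) by (apply Rmult_lt_0_compat; [lra| apply pow_lt; lra]).
  assert (0 < g1 th * u0) by (apply Rmult_lt_0_compat; lra).
  replace (u0 * u0) with (u0^2) by ring. split; nra.
Qed.

Definition Dsum (th : theta) (d0 d1 d2 d3 : R) (f : nat -> R) : R :=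
  g0 th * d0 * f 0%nat + g1 th * d1 * f 1%nat + g2 th * d2 * f 2%nat + a1 th * d3 * f 3%nat.

Ltac toR := match goal with |- ?a = ?b => change (a = b :> R) end.

Lemma outer_deriv (a K : R -> R) x da dK : is_derive a 0 da -> is_derive K 0 dK ->
  is_derive (fun h => exp (- (exp (a h * x) * K h))) 0
    (- exp (- (exp (a 0 * x) * K 0)) * exp (a 0 * x) * (da * x * K 0 + dK)).
Proof.
  intros Ha HK. auto_derive.
  - split; [exists da; exact Ha|]. split; [exists dK; exact HK|]. exact I.
    replace (Derive (fun x0 : R => a x0) 0) with da by (symmetry; apply is_derive_unique; exact Ha). replace (Derive (fun x0 : R => K x0) 0) with dK by (symmetry; apply is_derive_unique; exact HK). toR. field.
Qed.

Lemma HaD th d0 d1 d2 d3 : is_derive (fun h => a1 (thd th d0 d1 d2 d3 h)) 0 (a1 th * d3).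
Proof.
  unfold thd; cbn [a1]. auto_derive; auto. rewrite Rmult_0_l, exp_0. toR. field.
Qed.

Lemma HcD th d0 d1 d2 d3 v : is_derive (fun h => Hc (thd th d0 d1 d2 d3 h) v) 0
   (g0 th * d0 * v + g1 th * d1 * v ^ 2 / 2 + g2 th * d2 * v ^ 3 / 3).
Proof.
  unfold Hc, thd; cbn [g0 g1 g2]. auto_derive; auto. rewrite !Rmult_0_l, !exp_0. toR. field.
Qed.

Lemma Rx1_deriv x1 th d0 d1 d2 d3 t :
  is_derive (fun h => Rx1 x1 (thd th d0 d1 d2 d3 h) t) 0 (Dsum th d0 d1 d2 d3 (dRx1 x1 th t)).
Proof.
  pose proof (outer_deriv _ _ x1 _ _ (HaD th d0 d1 d2 d3) (HcD th d0 d1 d2 d3 t)) as H.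
  cbv beta in H. rewrite thd0 in H.
  replace (Dsum th d0 d1 d2 d3 (dRx1 x1 th t)) with
    (- exp (- (exp (a1 th * x1) * Hc th t)) * exp (a1 th * x1) *
       (a1 th * d3 * x1 * Hc th t + (g0 th * d0 * t + g1 th * d1 * t ^ 2 / 2 + g2 th * d2 * t ^ 3 / 3))).
  - exact H.
  - unfold Dsum, dRx1. fold (Rx1 x1 th t). unfold Hc, k2. field.
Qed.

Lemma KD x1 x2 tau th d0 d1 d2 d3 t uD :
  is_derive (fun h => u_root x1 x2 tau (thd th d0 d1 d2 d3 h)) 0 uD ->
  is_derive (fun h => Hc (thd th d0 d1 d2 d3 h) (t + s_shift x1 x2 tau (thd th d0 d1 d2 d3 h))) 0
    (g0 th * d0 * (t + s_shift x1 x2 tau th) + g1 th * d1 * (t + s_shift x1 x2 tau th) ^ 2 / 2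
     + g2 th * d2 * (t + s_shift x1 x2 tau th) ^ 3 / 3 + k1 th (t + s_shift x1 x2 tau th) * uD).
Proof.
  intro HU.
  set (Uf := fun h => u_root x1 x2 tau (thd th d0 d1 d2 d3 h)) in HU.
  apply (is_derive_ext (fun h => g0 th * exp (h*d0) * (t + (Uf h - tau))
     + g1 th * exp (h*d1) * (t + (Uf h - tau)) ^ 2 / 2 + g2 th * exp (h*d2) * (t + (Uf h - tau)) ^ 3 / 3)).
  { intro h; reflexivity. }
  auto_derive.
  - repeat split; auto; exists uD; exact HU.
  - replace (Derive (fun x0 : R => Uf x0) 0) with uD by (symmetry; apply is_derive_unique; exact HU).
    unfold Uf; rewrite thd0. unfold s_shift, k1. rewrite !Rmult_0_l, !exp_0. toR. field.
Qed.

Lemma Rx2_deriv x1 x2 tau th d0 d1 d2 d3 t : 0 < tau -> inTheta th ->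
  is_derive (fun h => Rx2 x1 x2 tau (thd th d0 d1 d2 d3 h) t) 0 (Dsum th d0 d1 d2 d3 (dRx2 x1 x2 tau th t)).
Proof.
  intros Htau Hth.
  pose proof (U_deriv x1 x2 tau th d0 d1 d2 d3 Htau Hth) as HU. cbv zeta in HU.
  pose proof (outer_deriv _ _ x2 _ _ (HaD th d0 d1 d2 d3) (KD x1 x2 tau th d0 d1 d2 d3 t _ HU)) as H.
  cbv beta in H. rewrite thd0 in H.
  match type of H with is_derive _ _ ?v =>
    replace (Dsum th d0 d1 d2 d3 (dRx2 x1 x2 tau th t)) with v; [exact H|] end.
  destruct (u_spec x1 x2 tau th Htau Hth) as [Hu0 Hu0e].
  unfold Dsum, dRx2. fold (Rx2 x1 x2 tau th t).
  unfold s_shift. set (u0 := u_root x1 x2 tau th) in *.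
  replace (tau + (u0 - tau)) with u0 by ring.
  assert (HcT : 0 < Hc th tau) by (apply Hc_pos; auto).
  assert (HE : exp (a1 th * (x1 - x2)) = Hc th u0 / Hc th tau) by (rewrite Hu0e; field; lra).
  rewrite HE.
  destruct Hth as [P0 [P1 [P2 _]]].
  assert (K1 : 0 < k1 th u0).
  { unfold k1. assert (0 < g2 th * u0^2) by (apply Rmult_lt_0_compat; [lra| apply pow_lt; lra]).
    assert (0 < g1 th * u0) by (apply Rmult_lt_0_compat; lra). lra. }
  assert (K2 : 0 < k2 th tau).
  { unfold k2. assert (0 < g2 th / 3 * tau^2) by (apply Rmult_lt_0_compat; [lra| apply pow_lt; lra]).
    assert (0 < g1 th / 2 * tau) by (apply Rmult_lt_0_compat; lra). lra. }
  unfold Hc, k1, k2 in *.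
  field. repeat split; lra.
Qed.

Lemma E_rel x1 x2 tau th : 0 < tau -> inTheta th ->
  exp (a1 th * x2) * Hc th (u_root x1 x2 tau th) = exp (a1 th * x1) * Hc th tau.
Proof.
  intros Htau Hth. destruct (u_spec x1 x2 tau th Htau Hth) as [_ He]. rewrite He.
  rewrite <- Rmult_assoc, <- exp_plus. f_equal. f_equal. ring.
Qed.

Lemma Rx_eq_tau x1 x2 tau th : 0 < tau -> inTheta th -> Rx1 x1 th tau = Rx2 x1 x2 tau th tau.
Proof.
  intros Htau Hth. unfold Rx1, Rx2, s_shift.
  replace (tau + (u_root x1 x2 tau th - tau)) with (u_root x1 x2 tau th) by ring.
  rewrite E_rel; auto.
Qed.

Lemma Rth_deriv_le x1 x2 tau th d0 d1 d2 d3 t : t <= tau ->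
  is_derive (fun h => Rth x1 x2 tau (thd th d0 d1 d2 d3 h) t) 0 (Dsum th d0 d1 d2 d3 (dRx1 x1 th t)).
Proof.
  intro Ht. apply (is_derive_ext (fun h => Rx1 x1 (thd th d0 d1 d2 d3 h) t)).
  - intro h. unfold Rth. destruct (Rle_dec t tau); [reflexivity| lra].
  - apply Rx1_deriv.
Qed.

Lemma Rth_deriv_ge x1 x2 tau th d0 d1 d2 d3 t : 0 < tau -> inTheta th -> tau <= t ->
  is_derive (fun h => Rth x1 x2 tau (thd th d0 d1 d2 d3 h) t) 0 (Dsum th d0 d1 d2 d3 (dRx2 x1 x2 tau th t)).
Proof.
  intros Htau Hth Ht. apply (is_derive_ext (fun h => Rx2 x1 x2 tau (thd th d0 d1 d2 d3 h) t)).
  - intro h. unfold Rth. destruct (Rle_dec t tau); [|reflexivity].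
    assert (t = tau) by lra. subst t. symmetry. apply Rx_eq_tau; auto. apply thd_in; auto.
  - apply Rx2_deriv; auto.
Qed.

Lemma tt_lt (L : nat) (tt : nat -> R) : (forall j, (j < L)%nat -> tt j < tt (S j)) ->
  forall i j, (i < j)%nat -> (j <= L)%nat -> tt i < tt j.
Proof.
  intros H i j; induction j as [|j IH]; intros Hij HjL; [lia|].
  destruct (Nat.eq_dec i j) as [e|ne].
  - subst; apply H; lia.
  - apply Rlt_trans with (tt j); [apply IH; lia| apply H; lia].
Qed.

Lemma tt_le (L : nat) (tt : nat -> R) : (forall j, (j < L)%nat -> tt j < tt (S j)) ->
  forall i j, (i <= j)%nat -> (j <= L)%nat -> tt i <= tt j.
Proof.
  intros H i j Hij HjL. destruct (Nat.eq_dec i j) as [e|ne]; [subst; lra|].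
  left; apply (tt_lt L); auto; lia.
Qed.

Lemma isd_minus (f g : R -> R) df dg l : is_derive f 0 df -> is_derive g 0 dg -> l = df - dg ->
  is_derive (fun h => f h - g h) 0 l.
Proof. intros Hf Hg ->. exact (is_derive_minus f g 0 df dg Hf Hg). Qed.

Lemma Dsum_minus th d0 d1 d2 d3 f g :
  Dsum th d0 d1 d2 d3 (fun i => f i - g i) = Dsum th d0 d1 d2 d3 f - Dsum th d0 d1 d2 d3 g.
Proof. unfold Dsum; ring. Qed.

Lemma pi_deriv x1 x2 tau L k tt th d0 d1 d2 d3 j :
  0 < tau -> inTheta th -> tt 0%nat = 0 -> (forall j, (j < L)%nat -> tt j < tt (S j)) ->
  (k < L)%nat -> tt k = tau -> (1 <= j <= S L)%nat ->
  is_derive (fun h => pi_ x1 x2 tau L tt (thd th d0 d1 d2 d3 h) j) 0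
     (Dsum th d0 d1 d2 d3 (wrow x1 x2 tau L tt th j)).
Proof.
  intros Htau Hth Ht0 Hmono HkL Htk Hj.
  destruct (Nat.leb_spec j L) as [HjL|HjL].
  - apply (is_derive_ext (fun h => Rth x1 x2 tau (thd th d0 d1 d2 d3 h) (tt (j-1)%nat)
                                 - Rth x1 x2 tau (thd th d0 d1 d2 d3 h) (tt j))).
    { intro h. unfold pi_. destruct (Nat.leb_spec j L); [reflexivity| lia]. }
    unfold wrow. destruct (Nat.leb_spec j L) as [_|]; [|lia].
    destruct (Rlt_dec (tt (j - 1)%nat) tau) as [Hlt|Hge].
    + assert (Hjk : (j <= k)%nat).
      { destruct (Nat.le_gt_cases j k) as [|Hgt]; auto.
        assert (tt k <= tt (j-1)%nat) by (apply (tt_le L); auto; lia). lra. }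
      assert (tt j <= tau) by (rewrite <- Htk; apply (tt_le L); auto; lia).
      apply isd_minus with (df := Dsum th d0 d1 d2 d3 (dRx1 x1 th (tt (j-1)%nat)))
                           (dg := Dsum th d0 d1 d2 d3 (dRx1 x1 th (tt j))).
      * apply Rth_deriv_le; lra.
      * apply Rth_deriv_le; lra.
      * apply Dsum_minus.
    + assert (tt (j-1)%nat <= tt j) by (apply (tt_le L); auto; lia).
      apply isd_minus with (df := Dsum th d0 d1 d2 d3 (dRx2 x1 x2 tau th (tt (j-1)%nat)))
                           (dg := Dsum th d0 d1 d2 d3 (dRx2 x1 x2 tau th (tt j))).
      * apply Rth_deriv_ge; auto; lra.
      * apply Rth_deriv_ge; auto; lra.
      * apply Dsum_minus.
  - assert (j = S L) by lia. subst j.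
    apply (is_derive_ext (fun h => Rth x1 x2 tau (thd th d0 d1 d2 d3 h) (tt L))).
    { intro h. unfold pi_. destruct (Nat.leb_spec (S L) L); [lia| reflexivity]. }
    unfold wrow. destruct (Nat.leb_spec (S L) L) as [|_]; [lia|].
    apply Rth_deriv_ge; auto.
    rewrite <- Htk. apply (tt_le L); auto; lia.
Qed.

Lemma Hc_lt th a b : inTheta th -> 0 <= a -> a < b -> Hc th a < Hc th b.
Proof.
  intros [P0 [P1 [P2 _]]] Ha Hab.
  assert (Hid : Hc th b - Hc th a = (b - a) * (g0 th + g1 th * (a + b) / 2 + g2 th * (a*a + a*b + b*b) / 3))
    by (unfold Hc; field).
  assert (0 < (b - a) * (g0 th + g1 th * (a + b) / 2 + g2 th * (a*a + a*b + b*b) / 3)).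
  { apply Rmult_lt_0_compat; [lra|].
    assert (0 <= g1 th * (a + b)) by (apply Rmult_le_pos; lra).
    assert (0 <= a*a + a*b + b*b) by nra.
    assert (0 <= g2 th * (a*a + a*b + b*b)) by (apply Rmult_le_pos; lra).
    lra. }
  lra.
Qed.

Lemma Rth_lt x1 x2 tau th a b : 0 < tau -> inTheta th -> 0 <= a -> a < b ->
  Rth x1 x2 tau th b < Rth x1 x2 tau th a.
Proof.
  intros Htau Hth Ha Hab.
  destruct (u_spec x1 x2 tau th Htau Hth) as [Hu _].
  pose proof (E_rel x1 x2 tau th Htau Hth) as HE.
  set (u := u_root x1 x2 tau th) in *.
  assert (e1 := exp_pos (a1 th * x1)). assert (e2 := exp_pos (a1 th * x2)).
  unfold Rth, Rx1, Rx2, s_shift. fold u.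
  destruct (Rle_dec b tau); destruct (Rle_dec a tau); try lra;
  apply exp_increasing; apply Ropp_lt_contravar.
  - apply Rmult_lt_compat_l; auto. apply Hc_lt; auto.
  - apply Rle_lt_trans with (exp (a1 th * x1) * Hc th tau).
    + apply Rmult_le_compat_l; [lra|]. destruct (Req_dec a tau); [subst; lra|].
      left; apply Hc_lt; auto; lra.
    + rewrite <- HE. apply Rmult_lt_compat_l; auto. apply Hc_lt; auto; lra.
  - apply Rmult_lt_compat_l; auto. apply Hc_lt; auto; lra.
Qed.

Lemma pi_pos x1 x2 tau L tt th j :
  0 < tau -> inTheta th -> tt 0%nat = 0 -> (forall j, (j < L)%nat -> tt j < tt (S j)) ->
  (1 <= j <= S L)%nat -> 0 < pi_ x1 x2 tau L tt th j.
Proof.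
  intros Htau Hth Ht0 Hmono Hj. unfold pi_.
  destruct (Nat.leb_spec j L).
  - assert (0 <= tt (j-1)%nat) by (rewrite <- Ht0; apply (tt_le L); auto; lia).
    assert (tt (j-1)%nat < tt j) by (apply (tt_lt L); auto; lia).
    pose proof (Rth_lt x1 x2 tau th _ _ Htau Hth H0 H1). lra.
  - unfold Rth, Rx1, Rx2. destruct Rle_dec; apply exp_pos.
Qed.

Lemma sum1_tel x1 x2 tau L tt th m : (m <= L)%nat ->
  sum1 m (pi_ x1 x2 tau L tt th) = Rth x1 x2 tau th (tt 0%nat) - Rth x1 x2 tau th (tt m).
Proof.
  induction m as [|m IH]; intro Hm; simpl sum1.
  - ring.
  - rewrite IH by lia. unfold pi_. destruct (Nat.leb_spec (S m) L); [|lia].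
    replace (S m - 1)%nat with m by lia. ring.
Qed.

Lemma sum1_pi x1 x2 tau L tt th : 0 < tau -> tt 0%nat = 0 ->
  sum1 (S L) (pi_ x1 x2 tau L tt th) = 1.
Proof.
  intros Htau Ht0. simpl sum1. rewrite sum1_tel by lia.
  unfold pi_ at 1. destruct (Nat.leb_spec (S L) L); [lia|].
  rewrite Ht0. unfold Rth at 1. destruct (Rle_dec 0 tau); [|lra].
  unfold Rx1, Hc. replace (g0 th * 0 + g1 th * 0 ^ 2 / 2 + g2 th * 0 ^ 3 / 3) with 0 by field.
  rewrite Rmult_0_r, Ropp_0, exp_0. ring.
Qed.

Lemma isd_const c : is_derive (fun _ : R => c) 0 0.
Proof. apply is_derive_Reals, derivable_pt_lim_const. Qed.

Lemma sum1_deriv n (f : R -> nat -> R) (df : nat -> R) :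
  (forall j, (1 <= j <= n)%nat -> is_derive (fun h => f h j) 0 (df j)) ->
  is_derive (fun h => sum1 n (f h)) 0 (sum1 n df).
Proof.
  induction n as [|n IH]; intro H; simpl sum1.
  - apply isd_const.
  - apply (is_derive_plus (fun h => sum1 n (f h)) (fun h => f h (S n))).
    + apply IH. intros j Hj; apply H; lia.
    + apply H; lia.
Qed.

Lemma exp_bp1 b l : exp ((b + 1) * l) = exp ((b - 1) * l) * exp l * exp l.
Proof. rewrite <- !exp_plus. f_equal. ring. Qed.
Lemma exp_b b l : exp (b * l) = exp ((b - 1) * l) * exp l.
Proof. rewrite <- !exp_plus. f_equal. ring. Qed.

Lemma term_pos_deriv (P : R -> R) dP b p : 0 < b -> (forall h, 0 < P h) -> is_derive P 0 dP ->
  is_derive (fun h => pw (P h) (b + 1) - (1 + / b) * pw (P h) b * p + / b * pw p (b + 1)) 0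
    ((b + 1) * Rpower (P 0) (b - 1) * dP * (P 0 - p)).
Proof.
  intros Hb HP HdP.
  apply (is_derive_ext (fun h => exp ((b + 1) * ln (P h)) - (1 + / b) * exp (b * ln (P h)) * p
                                 + / b * pw p (b + 1))).
  { intro h. unfold pw. destruct (Rlt_dec 0 (P h)) as [_|n]; [reflexivity| specialize (HP h); lra]. }
  assert (Hex : ex_derive (fun x => P x) 0) by (exists dP; exact HdP).
  auto_derive; repeat split; auto.
  replace (Derive (fun x : R => P x) 0) with dP by (symmetry; apply is_derive_unique; exact HdP).
    rewrite (exp_bp1 b (ln (P 0))), (exp_b b (ln (P 0))), exp_ln by auto.
    unfold Rpower. specialize (HP 0). toR. field. lra.
Qed.

Lemma term0_deriv (P : R -> R) dP p : 0 <= p -> (forall h, 0 < P h) -> is_derive P 0 dP ->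
  is_derive (fun h => if Req_EM_T p 0 then 0 else p * ln (p / P h)) 0 (- (p / P 0) * dP).
Proof.
  intros Hp HP HdP. destruct (Req_EM_T p 0) as [e|ne].
  - subst p. replace (- (0 / P 0) * dP) with 0 by (unfold Rdiv; ring). apply isd_const.
  - assert (0 < p) by lra.
    assert (Hex : ex_derive (fun x => P x) 0) by (exists dP; exact HdP).
    assert (0 < p / P 0) by (apply Rdiv_lt_0_compat; auto).
    auto_derive; repeat split; auto. { specialize (HP 0); lra. }
    replace (Derive (fun x : R => P x) 0) with dP by (symmetry; apply is_derive_unique; exact HdP).
      specialize (HP 0). toR. field. lra.
Qed.

Lemma sum_id n b th d0 d1 d2 d3 (w : nat -> nat -> R) (r pi p : nat -> R) :
  sum1 n (fun j => (b + 1) * r j * Dsum th d0 d1 d2 d3 (w j) * (pi j - p j))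
  = - (b + 1) * Dsum th d0 d1 d2 d3 (fun i => sum1 n (fun j => w j i * r j * (p j - pi j))).
Proof.
  induction n as [|n IH]; simpl sum1.
  - unfold Dsum; simpl; ring.
  - rewrite IH. unfold Dsum; simpl; ring.
Qed.

Lemma Rpow_m1 x : 0 < x -> Rpower x (0 - 1) = / x.
Proof.
  intro Hx. unfold Rpower. replace ((0 - 1) * ln x) with (- ln x) by ring.
  rewrite exp_Ropp, exp_ln; auto.
Qed.

Lemma sum_id0 n th d0 d1 d2 d3 (w : nat -> nat -> R) (pi p : nat -> R) :
  (forall j, (1 <= j <= n)%nat -> 0 < pi j) ->
  sum1 n (fun j => - (p j / pi j) * Dsum th d0 d1 d2 d3 (w j))
  = - Dsum th d0 d1 d2 d3 (fun i => sum1 n (fun j => w j i * Rpower (pi j) (0 - 1) * (p j - pi j)))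
    - sum1 n (fun j => Dsum th d0 d1 d2 d3 (w j)).
Proof.
  induction n as [|n IH]; intro Hpi; simpl sum1.
  - unfold Dsum; simpl; ring.
  - rewrite IH by (intros j Hj; apply Hpi; lia).
    rewrite Rpow_m1 by (apply Hpi; lia).
    assert (0 < pi (S n)) by (apply Hpi; lia).
    unfold Dsum; simpl. field. lra.
Qed.

Lemma min_deriv (F : R -> R) l : is_derive F 0 l -> (forall h, F 0 <= F h) -> l = 0.
Proof.
  intros HF Hmin. apply is_derive_Reals in HF.
  pose (pr := exist (fun l => derivable_pt_lim F 0 l) l HF : derivable_pt F 0).
  rewrite <- (derive_pt_eq_0 F 0 l pr HF).
  apply (deriv_minimum F (-1) 1 0 pr); try lra.
  intros x _ _; apply Hmin.
Qed.

Lemma key (x1 x2 tau beta : R) (L k : nat) (tt : nat -> R) (n : nat -> nat) (thhat : theta) :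
  x1 < x2 -> 0 < tau ->
  tt 0%nat = 0 -> (forall j, (j < L)%nat -> tt j < tt (S j)) ->
  (1 <= k)%nat -> (k < L)%nat -> tt k = tau ->
  (0 < Ntot L n)%nat ->
  0 <= beta ->
  inTheta thhat ->
  (forall th, inTheta th ->
     dbeta beta L (phat L n) (pi_ x1 x2 tau L tt thhat)
     <= dbeta beta L (phat L n) (pi_ x1 x2 tau L tt th)) ->
  forall d0 d1 d2 d3,
  Dsum thhat d0 d1 d2 d3 (fun i => Ubeta x1 x2 tau beta L tt (phat L n) thhat i) = 0.
Proof.
  intros Hx Htau Ht0 Hmono Hk1 HkL Htk HN Hb Hth Hmin d0 d1 d2 d3.
  set (p := phat L n) in *.
  assert (Hp : forall j, 0 <= p j).
  { intro j. unfold p, phat. apply Rdiv_le_0_compat; [apply pos_INR| apply lt_0_INR; lia]. }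
  set (F := fun h => dbeta beta L p (pi_ x1 x2 tau L tt (thd thhat d0 d1 d2 d3 h))).
  assert (HFmin : forall h, F 0 <= F h).
  { intro h. unfold F. rewrite thd0. apply Hmin. apply thd_in; auto. }
  assert (Hpip : forall th j, inTheta th -> (1 <= j <= S L)%nat -> 0 < pi_ x1 x2 tau L tt th j).
  { intros th j Hth' Hj. apply pi_pos; auto. }
  assert (Hpid : forall j, (1 <= j <= S L)%nat ->
    is_derive (fun h => pi_ x1 x2 tau L tt (thd thhat d0 d1 d2 d3 h) j) 0
       (Dsum thhat d0 d1 d2 d3 (wrow x1 x2 tau L tt thhat j))).
  { intros j Hj. apply (pi_deriv x1 x2 tau L k); auto. }
  destruct (Req_EM_T beta 0) as [Hb0|Hb0].
  - subst beta.
    assert (HD : is_derive F 0 (sum1 (S L) (fun j => - (p j / pi_ x1 x2 tau L tt thhat j)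
                     * Dsum thhat d0 d1 d2 d3 (wrow x1 x2 tau L tt thhat j)))).
    { apply (is_derive_ext (fun h => sum1 (S L) (fun j =>
          if Req_EM_T (p j) 0 then 0 else p j * ln (p j / pi_ x1 x2 tau L tt (thd thhat d0 d1 d2 d3 h) j)))).
      { intro h. unfold F, dbeta. destruct (Req_EM_T 0 0); [reflexivity| congruence]. }
      apply (sum1_deriv (S L) (fun h j =>
          if Req_EM_T (p j) 0 then 0 else p j * ln (p j / pi_ x1 x2 tau L tt (thd thhat d0 d1 d2 d3 h) j))).
      intros j Hj.
      pose proof (term0_deriv (fun h => pi_ x1 x2 tau L tt (thd thhat d0 d1 d2 d3 h) j) _ (p j) (Hp j)
                    (fun h => Hpip _ j (thd_in _ _ _ _ _ h Hth) Hj) (Hpid j Hj)) as H.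
      cbv beta in H. rewrite thd0 in H. exact H. }
    pose proof (min_deriv F _ HD HFmin) as H0.
    rewrite sum_id0 in H0 by (intros j Hj; apply Hpip; auto).
    assert (Hsw : sum1 (S L) (fun j => Dsum thhat d0 d1 d2 d3 (wrow x1 x2 tau L tt thhat j)) = 0).
    { assert (H1 : is_derive (fun h => sum1 (S L) (pi_ x1 x2 tau L tt (thd thhat d0 d1 d2 d3 h))) 0
                     (sum1 (S L) (fun j => Dsum thhat d0 d1 d2 d3 (wrow x1 x2 tau L tt thhat j)))).
      { apply (sum1_deriv (S L) (fun h => pi_ x1 x2 tau L tt (thd thhat d0 d1 d2 d3 h))). exact Hpid. }
      assert (H2 : is_derive (fun h => sum1 (S L) (pi_ x1 x2 tau L tt (thd thhat d0 d1 d2 d3 h))) 0 0).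
      { apply (is_derive_ext (fun _ => 1)). { intro h. symmetry. apply sum1_pi; auto. } apply isd_const. }
      apply is_derive_unique in H1. apply is_derive_unique in H2. rewrite <- H1, H2. reflexivity. }
    rewrite Hsw in H0. unfold Ubeta. lra.
  - assert (Hbp : 0 < beta) by lra.
    assert (HD : is_derive F 0 (sum1 (S L) (fun j => (beta + 1) * Rpower (pi_ x1 x2 tau L tt thhat j) (beta - 1)
                     * Dsum thhat d0 d1 d2 d3 (wrow x1 x2 tau L tt thhat j) * (pi_ x1 x2 tau L tt thhat j - p j)))).
    { apply (is_derive_ext (fun h => sum1 (S L) (fun j =>
          pw (pi_ x1 x2 tau L tt (thd thhat d0 d1 d2 d3 h) j) (beta + 1)
          - (1 + / beta) * pw (pi_ x1 x2 tau L tt (thd thhat d0 d1 d2 d3 h) j) beta * p j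
          + / beta * pw (p j) (beta + 1)))).
      { intro h. unfold F, dbeta. destruct (Req_EM_T beta 0); [congruence| reflexivity]. }
      apply (sum1_deriv (S L) (fun h j =>
          pw (pi_ x1 x2 tau L tt (thd thhat d0 d1 d2 d3 h) j) (beta + 1)
          - (1 + / beta) * pw (pi_ x1 x2 tau L tt (thd thhat d0 d1 d2 d3 h) j) beta * p j
          + / beta * pw (p j) (beta + 1))).
      intros j Hj.
      pose proof (term_pos_deriv (fun h => pi_ x1 x2 tau L tt (thd thhat d0 d1 d2 d3 h) j) _ beta (p j) Hbp
                    (fun h => Hpip _ j (thd_in _ _ _ _ _ h Hth) Hj) (Hpid j Hj)) as H.
      cbv beta in H. rewrite thd0 in H. exact H. }
    pose proof (min_deriv F _ HD HFmin) as H0.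
    rewrite sum_id in H0.
    unfold Ubeta.
    apply (Rmult_eq_reg_l (- (beta + 1))); [|lra]. rewrite Rmult_0_r. exact H0.
Qed.

Theorem theorem2 (x1 x2 tau beta : R) (L k : nat) (tt : nat -> R) (n : nat -> nat)
  (thhat : theta) :
  x1 < x2 -> 0 < tau ->
  tt 0%nat = 0 -> (forall j, (j < L)%nat -> tt j < tt (S j)) ->
  (1 <= k)%nat -> (k < L)%nat -> tt k = tau ->
  (0 < Ntot L n)%nat ->
  0 <= beta ->
  inTheta thhat ->
  (forall th, inTheta th ->
     dbeta beta L (phat L n) (pi_ x1 x2 tau L tt thhat)
     <= dbeta beta L (phat L n) (pi_ x1 x2 tau L tt th)) ->
  forall i, (i < 4)%nat -> Ubeta x1 x2 tau beta L tt (phat L n) thhat i = 0.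
Proof.
  intros Hx Htau Ht0 Hmono Hk1 HkL Htk HN Hb Hth Hmin i Hi.
  pose proof (key x1 x2 tau beta L k tt n thhat Hx Htau Ht0 Hmono Hk1 HkL Htk HN Hb Hth Hmin) as K.
  destruct Hth as [P0 [P1 [P2 P3]]].
  destruct i as [|[|[|[|i]]]]; [| | | | lia].
  - specialize (K 1 0 0 0). unfold Dsum in K.
    rewrite !Rmult_0_r, !Rmult_0_l, !Rplus_0_r, Rmult_1_r in K.
    apply Rmult_integral in K as [K|K]; [lra|exact K].
  - specialize (K 0 1 0 0). unfold Dsum in K.
    rewrite !Rmult_0_r, !Rmult_0_l, !Rplus_0_r, !Rplus_0_l, Rmult_1_r in K.
    apply Rmult_integral in K as [K|K]; [lra|exact K].
  - specialize (K 0 0 1 0). unfold Dsum in K.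
    rewrite !Rmult_0_r, !Rmult_0_l, !Rplus_0_r, !Rplus_0_l, Rmult_1_r in K.
    apply Rmult_integral in K as [K|K]; [lra|exact K].
  - specialize (K 0 0 0 1). unfold Dsum in K.
    rewrite !Rmult_0_r, !Rmult_0_l, !Rplus_0_l, Rmult_1_r in K.
    apply Rmult_integral in K as [K|K]; [lra|exact K].
Qed.
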